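(* Let $m\ge 4$ be an integer. For every $f:\{0,1\}^N\to\{0,1\}$, $$C^{*,\oplus}(f\circ\mathrm{IND}_m^N)\ge \tfrac12\, C^{dt}(f)\log_2 m.$$ Furthermore, for every relation $R\subseteq\{0,1\}^N\times W$, $$C^{*,\oplus}(R\circ\mathrm{IND}_m^N)\ge\tfrac12\,C^{dt}(R)\log_2 m.$$
   Context: $\mathrm{IND}_m:[m]\times\{0,1\}^m\to\{0,1\}$, $\mathrm{IND}_m(x,y)=y_x$; $\mathrm{IND}_m^N(x,y)=(\mathrm{IND}_m(x_i,y_i))_{i\in[N]}$ for $x\in[m]^N$ (Alice's input) and $y\in(\{0,1\}^m)^N$ (Bob's input, viewed as a vector in $\mathbb{F}_2^{[N]\times[m]}$). The lifted function is $(f\circ\mathrm{IND}_m^N)(x,y)=f(\mathrm{IND}_m^N(x,y))$; the lifted relation $R\circ\mathrm{IND}_m^N$ relates $(x,y)$ to $w$ iff $(\mathrm{IND}_m^N(x,y),w)\in R$. A $( *,\oplus)$-protocol (semi-structured protocol) is a deterministic two-party communication protocol in which Alice may send arbitrary functions of her input (and the transcript so far) but each bit Bob sends is a parity $\bigoplus_{(i,j)\in S}y_{i,j}$ of his input bits, with $S$ depending on the transcript so far. $C^{*,\oplus}(F)$ is the minimum worst-case number of bits communicated by a $( *,\oplus)$-protocol computing $F$; for a relation, the protocol on input $(x,y)$ must output some $w$ related to $(x,y)$ (or $\bot$ if none exists). $C^{dt}(f)$ (resp. $C^{dt}(R)$) is the minimum height of a decision tree querying bits of $z\in\{0,1\}^N$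 that computes $f$ (resp. outputs some $w$ with $(z,w)\in R$, or $\bot$ if no such $w$ exists). *)

(* Defs.v *)
From Stdlib Require Import Reals.
From mathcomp Require Import all_boot.
Set Implicit Arguments. Unset Strict Implicit. Unset Printing Implicit Defensive.

Definition Ain (N m : nat) := {ffun 'I_N -> 'I_m}.
Definition Bin (N m : nat) := {ffun 'I_N -> {ffun 'I_m -> bool}}.
Definition Zin (N : nat) := {ffun 'I_N -> bool}.

Definition INDN (N m : nat) (x : Ain N m) (y : Bin N m) : Zin N :=
  [ffun i => y i (x i)].

Definition parity (N m : nat) (S : {set 'I_N * 'I_m}) (y : Bin N m) : bool :=
  \big[addb/false]_(p in S) y p.1 p.2.

Inductive dtree (N : nat) (O : Type) : Type :=
| DLeaf of O
| DQuery of 'I_N & dtree N O & dtree N O.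

Fixpoint dt_eval N O (T : dtree N O) (z : Zin N) : O :=
  match T with
  | DLeaf o => o
  | DQuery i T0 T1 => if z i then dt_eval T1 z else dt_eval T0 z
  end.

Fixpoint dt_queries N O (T : dtree N O) (z : Zin N) : nat :=
  match T with
  | DLeaf _ => 0
  | DQuery i T0 T1 => (if z i then dt_queries T1 z else dt_queries T0 z).+1
  end.

Definition dt_cost N O (T : dtree N O) : nat := \max_(z : Zin N) dt_queries T z.

(* Transcript dependence is encoded by the position in the protocol tree.   *)
Inductive xprot (N m : nat) (O : Type) : Type :=
| PLeaf of O
| PAlice of (Ain N m -> bool) & xprot N m O & xprot N m O
| PBob of {set 'I_N * 'I_m} & xprot N m O & xprot N m O.

Fixpoint xp_eval N m O (P : xprot N m O) (x : Ain N m) (y : Bin N m) : O :=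
  match P with
  | PLeaf o => o
  | PAlice a P0 P1 => if a x then xp_eval P1 x y else xp_eval P0 x y
  | PBob Sb P0 P1 => if parity Sb y then xp_eval P1 x y else xp_eval P0 x y
  end.

Fixpoint xp_bits N m O (P : xprot N m O) (x : Ain N m) (y : Bin N m) : nat :=
  match P with
  | PLeaf _ => 0
  | PAlice a P0 P1 => (if a x then xp_bits P1 x y else xp_bits P0 x y).+1
  | PBob Sb P0 P1 => (if parity Sb y then xp_bits P1 x y else xp_bits P0 x y).+1
  end.

Definition xp_cost N m O (P : xprot N m O) : nat :=
  \max_(x : Ain N m) \max_(y : Bin N m) xp_bits P x y.

(* An output in option W (None = ⊥) is correct for R on z. *)
Definition rel_ok (N : nat) (W : Type) (R : Zin N -> W -> Prop) (z : Zin N)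
  (o : option W) : Prop :=
  match o with
  | Some w => R z w
  | None => forall w, ~ R z w
  end.

Definition dt_computes_fun N (f : Zin N -> bool) (T : dtree N bool) : Prop :=
  forall z, dt_eval T z = f z.

Definition dt_computes_rel N W (R : Zin N -> W -> Prop) (T : dtree N (option W)) : Prop :=
  forall z, rel_ok R z (dt_eval T z).

Definition xp_computes_lifted_fun N m (f : Zin N -> bool) (P : xprot N m bool) : Prop :=
  forall x y, xp_eval P x y = f (INDN x y).

Definition xp_computes_lifted_rel N m W (R : Zin N -> W -> Prop)
  (P : xprot N m (option W)) : Prop :=
  forall x y, rel_ok R (INDN x y) (xp_eval P x y).

(* C^dt(f) = min depth: we express "c >= 1/2 C^dt log2 m" as
   "c >= 1/2 h log2 m for every h that lower-bounds the cost of every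
   decision tree computing f" (equivalently, for h = the minimum). *)
Definition dt_fun_lb N (f : Zin N -> bool) (h : nat) : Prop :=
  forall T : dtree N bool, dt_computes_fun f T -> h <= dt_cost T.

Definition dt_rel_lb N W (R : Zin N -> W -> Prop) (h : nat) : Prop :=
  forall T : dtree N (option W), dt_computes_rel R T -> h <= dt_cost T.

Definition log2R (x : R) : R := Rdiv (ln x) (ln (IZR 2)).

(* Main.v *)
Require Import Defs.
From Stdlib Require Import Reals Lra.
From mathcomp Require Import all_boot.
From mathcomp Require Import zify.
Set Implicit Arguments. Unset Strict Implicit. Unset Printing Implicit Defensive.

Section Main.
Variables (N m : nat) (O : Type) (ok : Zin N -> O -> Prop).

Definition bx (y1 y2 : Bin N m) : Bin N m := [ffun k => [ffun j => y1 k j (+) y2 k j]].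
Definition ep (p : 'I_N * 'I_m) : Bin N m := [ffun k => [ffun j => (k, j) == p]].
Definition setc (y : Bin N m) (p : 'I_N * 'I_m) (c : bool) : Bin N m :=
  [ffun k => [ffun j => if (k, j) == p then c else y k j]].
Definition y0 : Bin N m := [ffun k => [ffun j => false]].

Definition affine (h : Bin N m -> bool) :=
  forall y1 y2 y3, h (bx (bx y1 y2) y3) = h y1 (+) h y2 (+) h y3.

Lemma parity_aff S : affine (parity S).
Proof.
move=> y1 y2 y3; rewrite /parity.
under eq_bigr => p _ do rewrite !ffunE.
by rewrite !big_split.
Qed.

Lemma flip_unif (h : Bin N m -> bool) : affine h -> forall p y y1,
  h (bx y (ep p)) (+) h y = h (bx y1 (ep p)) (+) h y1.
Proof.
move=> ha p y y1.
have -> : bx y (ep p) = bx (bx y (bx y1 (ep p))) y1.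
  apply/ffunP => k; apply/ffunP => j; rewrite !ffunE.
  by case: (y k j); case: (y1 k j); case: ((k, j) == p).
rewrite ha.
by case: (h y); case: (h y1); case: (h (bx y1 (ep p))).
Qed.

Lemma setcE (h : Bin N m -> bool) : (forall p y, h (bx y (ep p)) = h y) ->
  forall p y c, h (setc y p c) = h y.
Proof.
move=> hf p y c.
case E: (y p.1 p.2 == c).
  congr h; apply/ffunP => k; apply/ffunP => j; rewrite !ffunE.
  case: eqP => // Ep; rewrite -Ep /= in E; by move/eqP: E.
rewrite -(hf p); congr h; apply/ffunP => k; apply/ffunP => j; rewrite !ffunE.
case: eqP => [Ep|]; last by rewrite addbF.
by rewrite addbT; rewrite -Ep /= in E; move: E; case: c; case: (y k j).
Qed.

Lemma const_h (h : Bin N m -> bool) : (forall p y, h (bx y (ep p)) = h y) -> forall y, h y = h y0.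
Proof.
move=> hf y.
pose clr (l : seq ('I_N * 'I_m)) := foldr (fun p y => setc y p false) y l.
have clrE l k j : clr l k j = if (k, j) \in l then false else y k j.
  elim: l => [|p l IH] //=; rewrite !ffunE in_cons IH.
  by case: eqP => [->|].
have hc l : h (clr l) = h y.
  elim: l => [|p l IH] //=; by rewrite setcE.
rewrite -(hc (enum (predT : pred ('I_N * 'I_m)))); congr h.
apply/ffunP => k; apply/ffunP => j; by rewrite clrE mem_enum !ffunE.
Qed.


Lemma card_fixed (Fr : {set 'I_N}) (s : 'I_N -> 'I_m) (X : {set Ain N m}) :
  (forall x, x \in X -> forall k, k \notin Fr -> x k = s k) -> #|X| <= m ^ #|Fr|.
Proof.
move=> hX.
pose phi := fun x : Ain N m => [ffun i : 'I_#|Fr| => x (enum_val i)].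
have inj : {in X &, injective phi}.
  move=> x1 x2 h1 h2 E; apply/ffunP => k.
  case kF: (k \in Fr); last by rewrite !hX ?kF.
  move/ffunP: E => /(_ (enum_rank_in kF k)).
  by rewrite /phi !ffunE enum_rankK_in.
rewrite -(card_in_imset inj).
apply: leq_trans (max_card _) _.
by rewrite card_ffun !card_ord.
Qed.


Record Inv (Fr : {set 'I_N}) (s : 'I_N -> 'I_m) (a : 'I_N -> bool)
  (X : {set Ain N m}) (NP : {set 'I_N * 'I_m}) (sg : Bin N m -> Bin N m) : Prop := MkInv {
  iA : forall x, x \in X -> forall k, k \notin Fr -> x k = s k;
  iB : forall x, x \in X -> forall k, k \in Fr -> (k, x k) \in NP;
  iC : forall y q, q \in NP -> sg y q.1 q.2 = y q.1 q.2;
  iD : forall y1 y2 : Bin N m, (forall q, q \in NP -> y1 q.1 q.2 = y2 q.1 q.2) -> sg y1 = sg y2;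
  iE : forall (y : Bin N m) k, k \notin Fr -> sg y k (s k) = a k;
  iF : forall y1 y2 y3 : Bin N m, sg (bx (bx y1 y2) y3) = bx (bx (sg y1) (sg y2)) (sg y3) }.

Definition claim (P : xprot N m O) := forall Fr s a X NP sg,
  Inv Fr s a X NP sg -> 0 < #|X| ->
  (forall x y, x \in X -> ok (INDN x (sg y)) (xp_eval P x (sg y))) ->
  exists T : dtree N O, forall z : Zin N, (forall k, k \notin Fr -> z k = a k) ->
    ok z (dt_eval T z) /\ exists x y, x \in X /\
      #|X| * m ^ dt_queries T z <= 2 ^ xp_bits P x (sg y) * 2 ^ dt_queries T z * m ^ #|Fr|.

Lemma Inv_sub Fr s a X (X' : {set Ain N m}) NP sg : Inv Fr s a X NP sg -> X' \subset X -> Inv Fr s a X' NP sg.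
Proof.
move=> [hA hB hC hD hE hF] /subsetP sub; split => //.
- by move=> x /sub; apply: hA.
- by move=> x /sub; apply: hB.
Qed.

Lemma ineq_step A A' M B C D : A <= 2 * A' -> A' * M <= B * C * D -> A * M <= (2 * B) * C * D.
Proof. move=> h1 h2. nia. Qed.

Lemma claim_leaf o : claim (PLeaf _ _ o).
Proof.
move=> Fr s a X NP sg [hA hB hC hD hE hF] hX hok.
exists (DLeaf _ o) => z hz.
case/card_gt0P: hX => x xX.
pose y : Bin N m := [ffun k => [ffun j : 'I_m => z k]].
have Ez : INDN x (sg y) = z.
  apply/ffunP => k; rewrite ffunE.
  case kF: (k \in Fr).
    by rewrite (hC y (k, x k) (hB x xX k kF)) /= !ffunE.
  by rewrite (hA x xX k) ?kF // hE ?kF // hz ?kF.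
split; first by have := hok x y xX; rewrite Ez.
exists x, y; split => //=.
rewrite expn0 !muln1 mul1n; exact: card_fixed hA.
Qed.

Lemma half_split (X A : {set Ain N m}) :
  0 < #|X| -> exists2 b : bool, 0 < #|if b then X :&: A else X :\: A| &
     #|X| <= 2 * #|if b then X :&: A else X :\: A|.
Proof.
move=> hX; have := cardsID A X.
rewrite /=; set u := #|X :&: A|; set v := #|X :\: A|; move: hX; set w := #|X|.
move=> hX hs.
case: (leqP w (2 * u)) => hc.
  by exists true => /=; rewrite -/u; lia.
by exists false => /=; rewrite -/v; lia.
Qed.

Lemma step P P' Fr s a (X X' : {set Ain N m}) NP' sg (sg' tau : Bin N m -> Bin N m) :
 claim P' -> Inv Fr s a X' NP' sg' -> X' \subset X -> 0 < #|X'| -> #|X| <= 2 * #|X'| ->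
 (forall y, sg' y = sg (tau y)) ->
 (forall x y, x \in X' -> xp_eval P x (sg (tau y)) = xp_eval P' x (sg (tau y)) /\
     xp_bits P x (sg (tau y)) = (xp_bits P' x (sg (tau y))).+1) ->
 (forall x y, x \in X -> ok (INDN x (sg y)) (xp_eval P x (sg y))) ->
 exists T : dtree N O, forall z : Zin N, (forall k, k \notin Fr -> z k = a k) ->
    ok z (dt_eval T z) /\ exists x y, x \in X /\
      #|X| * m ^ dt_queries T z <= 2 ^ xp_bits P x (sg y) * 2 ^ dt_queries T z * m ^ #|Fr|.
Proof.
move=> IH inv sub hX' h2 hsg hP hok.
have hok' : forall x y, x \in X' -> ok (INDN x (sg' y)) (xp_eval P' x (sg' y)).
  move=> x y xX; rewrite hsg; have [<- _] := hP x y xX.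
  exact: hok x (tau y) (subsetP sub x xX).
have [T hT] := IH Fr s a X' NP' sg' inv hX' hok'.
exists T => z hz; have [okz [x [y [xX hin]]]] := hT z hz.
split => //; exists x, (tau y); split; first exact: (subsetP sub).
have [_ ->] := hP x y xX.
rewrite expnS; apply: ineq_step h2 _.
by rewrite -hsg.
Qed.

Lemma claim_alice f P0 P1 : claim P0 -> claim P1 -> claim (PAlice f P0 P1).
Proof.
move=> IH0 IH1 Fr s a X NP sg inv hX hok.
have [b hb1 hb2] := half_split [set x | f x] hX.
case: b hb1 hb2 => hb1 hb2.
  apply: (step (X' := X :&: [set x | f x]) (tau := id) IH1 (Inv_sub inv (subsetIl _ _)) (subsetIl _ _) hb1 hb2) => //.
  by move=> x y; rewrite !inE => /andP[_ /= ->].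
apply: (step (X' := X :\: [set x | f x]) (tau := id) IH0 (Inv_sub inv (subsetDl _ _)) (subsetDl _ _) hb1 hb2) => //.
by move=> x y; rewrite !inE => /andP[/= /negbTE -> _].
Qed.

Lemma setc_flip (y : Bin N m) p c :
  setc y p c = if y p.1 p.2 == c then y else bx y (ep p).
Proof.
case E: (y p.1 p.2 == c); apply/ffunP => k; apply/ffunP => j; rewrite !ffunE.
  case: eqP => // Ep; rewrite -Ep /= in E; by move/eqP: E.
case: eqP => [Ep|]; last by rewrite addbF.
by rewrite addbT; rewrite -Ep /= in E; move: E; case: c; case: (y k j).
Qed.

Lemma ineq_fix A A' M B C D : A <= 2 * A' -> A' * M <= B * C * D ->
  A * (m * M) <= B * (2 * C) * (m * D).
Proof.
move=> h1 h2.
apply: leq_trans (_ : 2 * A' * (m * M) <= _); first by rewrite leq_mul2r h1 orbT.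
have -> : 2 * A' * (m * M) = (2 * m) * (A' * M) by nia.
have -> : B * (2 * C) * (m * D) = (2 * m) * (B * C * D) by nia.
by rewrite leq_mul2l h2 orbT.
Qed.

Lemma claim_bob S P0 P1 : claim P0 -> claim P1 -> claim (PBob S P0 P1).
Proof.
move=> IH0 IH1.
have IHb : forall b : bool, claim (if b then P1 else P0) by case.
have ev : forall x y, xp_eval (PBob S P0 P1) x y = xp_eval (if parity S y then P1 else P0) x y /\
    xp_bits (PBob S P0 P1) x y = (xp_bits (if parity S y then P1 else P0) x y).+1.
  by move=> x y /=; case: (parity S y).
suff H : forall n (Fr : {set 'I_N}) (s : 'I_N -> 'I_m) (a : 'I_N -> bool) (X : {set Ain N m}) (NP : {set 'I_N * 'I_m}) (sg : Bin N m -> Bin N m), #|Fr| < n -> Inv Fr s a X NP sg -> 0 < #|X| ->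
   (forall x y, x \in X -> ok (INDN x (sg y)) (xp_eval (PBob S P0 P1) x (sg y))) ->
   exists T : dtree N O, forall z : Zin N, (forall k, k \notin Fr -> z k = a k) ->
    ok z (dt_eval T z) /\ exists x y, x \in X /\
      #|X| * m ^ dt_queries T z <= 2 ^ xp_bits (PBob S P0 P1) x (sg y) * 2 ^ dt_queries T z * m ^ #|Fr|.
  by move=> Fr s a X NP sg; apply: (H #|Fr|.+1).
elim=> [|n IHn] // Fr s a X NP sg hn inv hX hok.
pose h := fun y => parity S (sg y).
have ha : affine h by move=> y1 y2 y3; rewrite /h (iF inv) parity_aff.
case: (pickP (fun p => h (bx y0 (ep p)) != h y0)) => [p hp | hno]; last first.
  have hc : forall y, h y = h y0.
    apply: const_h => p y; have := flip_unif ha p y y0.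
    have := hno p => /= /negbFE/eqP ->.
    by rewrite addbb; case: (h (bx y (ep p))); case: (h y).
  apply: (step (X' := X) (tau := id) (IHb (h y0)) inv (subxx _) hX _ (fun _ => erefl)) => //.
    by rewrite mul2n -addnn leq_addr.
  move=> x y _; rewrite -(hc y); exact: ev.
have hflip : forall y, h (bx y (ep p)) = ~~ h y.
  move=> y; have := flip_unif ha p y y0; move: hp => /=.
  by case: (h (bx y0 (ep p))); case: (h y0) => //= _; case: (h (bx y (ep p))); case: (h y).
have pNP : p \in NP.
  apply/negPn/negP => pN.
  have := hflip y0; rewrite /h (iD inv (y1 := bx y0 (ep p)) (y2 := y0)).
    by case: (parity S (sg y0)).
  move=> q qN; rewrite !ffunE; case: eqP => [Eq|]; last by rewrite addbF.
  by rewrite -Eq in pN; case: q qN pN Eq => ? ? /= ->.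
case: p hp hflip pNP => i j hp hflip pNP.
have [b hb1 hb2] := half_split [set x : Ain N m | x i == j] hX.
case: b hb1 hb2 => hb1 hb2; last first.
  pose tau y := bx y [ffun k => [ffun j' => ((k, j') == (i, j)) && h y]].
  have tauE y : tau y = if h y then bx y (ep (i, j)) else y.
    apply/ffunP => k; apply/ffunP => j'; rewrite /tau; case: (h y); rewrite !ffunE ?andbT ?andbF ?addbF //.
  have htau y : h (tau y) = false by rewrite tauE; case E: (h y); rewrite ?hflip E.
  apply: (step (X' := X :\: [set x : Ain N m | x i == j]) (NP' := NP :\ (i, j)) (sg' := fun y => sg (tau y)) (tau := tau) (IHb false) _ (subsetDl _ _) hb1 hb2) => //; last first.
    move=> x y _; have := ev x (sg (tau y)); have := htau y; rewrite /h => ->; done.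
  split.
  - by move=> x; rewrite inE => /andP[_ xX]; apply: (iA inv).
  - move=> x; rewrite !inE => /andP[xne xX] k kF.
    rewrite in_setD1 (iB inv) // andbT; apply/eqP => -[ek ex].
    by move: xne; rewrite -ek ex eqxx.
  - move=> y [k j']; rewrite !inE /= => /andP[qne qNP].
    by rewrite (iC inv _ qNP) /= /tau !ffunE (negbTE qne) andFb addbF.
  - move=> y1 y2 hag; apply: (iD inv) => -[k j'] qNP /=.
    rewrite /tau !ffunE.
    case: eqP => [[ek ej]|qne]; last first.
      by rewrite !andFb !addbF; apply: (hag (k, j')); rewrite !inE qNP andbT; apply/eqP.
    rewrite !andTb ek ej.
    pose y2' := setc y2 (i, j) (y1 i j).
    have e1 : h y1 = h y2'.
      rewrite /h (iD inv (y1 := y1) (y2 := y2')) // => -[k' j''] qN /=.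
      rewrite /y2' !ffunE; case: eqP => [[-> ->]|qne] //.
      by rewrite (hag (k', j'')) // !inE qN andbT; apply/eqP.
    move: e1; rewrite /y2' setc_flip /=.
    case: eqP => [-> -> //|ne]; rewrite hflip.
    by move: ne; case: (y1 i j); case: (y2 i j); case: (h y2) => //= _ ->.
  - by move=> y k kF; apply: (iE inv).
  - move=> y1 y2 y3; rewrite -(iF inv); congr sg.
    apply/ffunP => k; apply/ffunP => j'; rewrite /tau !ffunE ha.
    by case: (_ == _); case: (y1 k j'); case: (y2 k j'); case: (y3 k j'); case: (h y1); case: (h y2); case: (h y3).
have iFr : i \in Fr.
  apply/negPn/negP => iN.
  case Es: (s i == j).
    have e1 := iE inv y0 iN; have e2 := iE inv (ep (i, j)) iN.
    move/eqP: Es e1 e2 => ->.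
    rewrite (iC inv y0 pNP) (iC inv (ep (i, j)) pNP) /= !ffunE eqxx.
    by move=> <-.
  case/card_gt0P: hb1 => x; rewrite !inE => /andP[xX /eqP xi].
  by move: Es; rewrite -(iA inv xX iN) xi eqxx.
set X' := X :&: [set x : Ain N m | x i == j].
have hsub : X' \subset X by apply: subsetIl.
have Hc : forall c : bool, exists T : dtree N O, forall z : Zin N, z i = c ->
    (forall k, k \notin Fr -> z k = a k) ->
    ok z (dt_eval T z) /\ exists x y, x \in X /\
      #|X| * m ^ (dt_queries T z).+1 <= 2 ^ xp_bits (PBob S P0 P1) x (sg y) * 2 ^ (dt_queries T z).+1 * m ^ #|Fr|.
  move=> c.
  pose a' k := if k == i then c else a k.
  pose s' k := if k == i then j else s k.
  pose sg' y := sg (setc y (i, j) c).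
  have inv' : Inv (Fr :\ i) s' a' X' (NP :\ (i, j)) sg'.
    split.
    - move=> x; rewrite !inE => /andP[xX /eqP xi] k; rewrite !inE negb_and negbK /s'.
      case: eqP => [-> //|kne] /= kF; exact: (iA inv).
    - move=> x; rewrite !inE => /andP[xX _] k; rewrite !inE => /andP[kne kF].
      rewrite (iB inv) // andbT; apply/eqP => -[ek _]; by rewrite ek eqxx in kne.
    - move=> y [k j']; rewrite !inE /= => /andP[qne qNP].
      by rewrite /sg' (iC inv _ qNP) /= !ffunE (negbTE qne).
    - move=> y1 y2 hag; apply: (iD inv) => -[k j'] qNP /=.
      rewrite !ffunE; case: eqP => // qne.
      by apply: (hag (k, j')); rewrite !inE qNP andbT; apply/eqP.
    - move=> y k; rewrite !inE negb_and negbK /s' /a' /sg'.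
      case: eqP => [-> _|kne /= kF]; last exact: (iE inv).
      by rewrite (iC inv _ pNP) /= !ffunE eqxx.
    - move=> y1 y2 y3; rewrite /sg' -(iF inv); congr sg.
      apply/ffunP => k; apply/ffunP => j'; rewrite !ffunE.
      by case: (_ == _) => //; rewrite addbb.
  have hn' : #|Fr :\ i| < n.
    by move: hn; rewrite (cardsD1 i Fr) iFr.
  have hok' : forall x y, x \in X' -> ok (INDN x (sg' y)) (xp_eval (PBob S P0 P1) x (sg' y)).
    by move=> x y xX; apply: hok; apply: (subsetP hsub).
  have [T hT] := IHn _ _ _ _ _ _ hn' inv' hb1 hok'.
  exists T => z zi hz.
  have hz' : forall k, k \notin Fr :\ i -> z k = a' k.
    move=> k; rewrite !inE negb_and negbK /a'; case: eqP => [-> //|kne] /=; exact: hz.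
  have [okz [x [y [xX hin]]]] := hT z hz'.
  split => //; exists x, (setc y (i, j) c); split; first exact: (subsetP hsub).
  rewrite (cardsD1 i Fr) iFr add1n !(expnS m) (expnS 2 (dt_queries T z)).
  exact: ineq_fix hb2 hin.
have [T0 h0] := Hc false; have [T1 h1] := Hc true.
exists (DQuery i T0 T1) => z hz /=.
by case E: (z i); [apply: h1 | apply: h0].
Qed.

Lemma claim_all P : claim P.
Proof.
elim: P => [o|f P0 IH0 P1 IH1|S P0 IH0 P1 IH1].
- exact: claim_leaf.
- exact: claim_alice.
- exact: claim_bob.
Qed.

End Main.

Lemma final (m N : nat) (hm : 4 <= m) O (ok : Zin N -> O -> Prop) (P : xprot N m O) :
  (forall x y, ok (INDN x y) (xp_eval P x y)) ->
  exists T : dtree N O, (forall z, ok z (dt_eval T z)) /\ m ^ dt_cost T <= 4 ^ xp_cost P.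
Proof.
move=> hok.
have m0 : 0 < m by apply: leq_trans hm.
pose j0 : 'I_m := Ordinal m0.
have inv : Inv [set: 'I_N] (fun _ => j0) (fun _ => false) [set: Ain N m] [set: 'I_N * 'I_m] id.
  split => //.
  - by move=> x _ k; rewrite inE.
  - by move=> x _ k _; rewrite inE.
  - move=> y1 y2 h; apply/ffunP => k; apply/ffunP => j; exact: (h (k, j) (in_setT _)).
  - by move=> y k; rewrite inE.
have hX : 0 < #|[set: Ain N m]| by rewrite cardsT card_ffun card_ord expn_gt0 m0.
have [T hT] := claim_all (ok := ok) (P := P) inv hX (fun x y _ => hok x y).
have hz z : (forall k, k \notin [set: 'I_N] -> z k = false) by move=> k; rewrite inE.
exists T; split; first by move=> z; have [] := hT z (hz z).
have key : forall z, m ^ dt_queries T z <= 4 ^ xp_cost P.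
  move=> z; have [_ [x [y [_ hin]]]] := hT z (hz z).
  move: hin; rewrite !cardsT card_ffun !card_ord mulnC leq_pmul2r ?expn_gt0 ?m0 //.
  set q := dt_queries T z => hin.
  have hb : xp_bits P x (id y) <= xp_cost P.
    rewrite /xp_cost; apply: (bigmax_sup x) => //; exact: (bigmax_sup y).
  have h1 : m ^ q <= 2 ^ xp_cost P * 2 ^ q.
    apply: leq_trans hin _; rewrite leq_mul2r leq_pexp2l ?orbT //.
  have h4 : 4 ^ q <= m ^ q by case: (q) => [|q'] //; rewrite leq_exp2r.
  have h2 : m ^ q * m ^ q <= 4 ^ xp_cost P * m ^ q.
    apply: leq_trans (leq_mul h1 h1) _.
    have -> : 2 ^ xp_cost P * 2 ^ q * (2 ^ xp_cost P * 2 ^ q) = 4 ^ xp_cost P * 4 ^ q.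
      by rewrite (_ : 4 = 2 * 2) // !expnMn; nia.
    by rewrite leq_mul2l h4 orbT.
  by rewrite leq_pmul2r ?expn_gt0 ?m0 in h2.
have cz : 0 < #|Zin N| by rewrite card_ffun card_bool expn_gt0.
rewrite /dt_cost; have [z0 ->] := eq_bigmax (dt_queries T) cz.
exact: key.
Qed.

Section Real.
Local Open Scope R_scope.

Lemma INR_expn (a n : nat) : INR (a ^ n)%N = INR a ^ n.
Proof. elim: n => [|n IH] //=; by rewrite expnS mult_INR IH. Qed.

Lemma ln_le' x y : 0 < x -> x <= y -> ln x <= ln y.
Proof.
move=> hx hxy; case: (Rle_lt_or_eq_dec _ _ hxy) => [h|->]; last by apply: Rle_refl.
by apply: Rlt_le; apply: ln_increasing.
Qed.

Lemma real_part (m h c : nat) : (4 <= m)%N -> (m ^ h <= 4 ^ c)%N ->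
  Rge (INR c) (Rmult (Rmult (Rinv (IZR 2)) (INR h)) (log2R (INR m))).
Proof.
move=> hm H.
have Hm : 4 <= INR m by have := le_INR 4 m (elimT leP hm); rewrite /=; lra.
have H' : INR m ^ h <= INR 4 ^ c by rewrite -!INR_expn; apply: le_INR; apply/leP.
have H'' : INR h * ln (INR m) <= INR c * ln (INR 4).
  rewrite -!ln_pow; [|simpl; lra|lra].
  by apply: ln_le' => //; apply: pow_lt; lra.
have l4 : ln (INR 4) = 2 * ln 2.
  have -> : INR 4 = 2 ^ 2 by simpl; lra.
  by rewrite ln_pow; [simpl; lra|lra].
have l2 := ln_lt_2.
apply: Rle_ge; rewrite /log2R.
apply: (Rmult_le_reg_r (2 * ln 2)); first lra.
have -> : / 2 * INR h * (ln (INR m) / ln 2) * (2 * ln 2) = INR h * ln (INR m).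
  by field; lra.
rewrite l4 in H''; lra.
Qed.
End Real.

Theorem theorem15 (m N : nat) (hm : 4 <= m) :
  (forall (f : Zin N -> bool) (P : xprot N m bool) (h : nat),
      xp_computes_lifted_fun f P -> dt_fun_lb f h ->
      Rge (INR (xp_cost P)) (Rmult (Rmult (Rinv (IZR 2)) (INR h)) (log2R (INR m))))
  /\
  (forall (W : Type) (R : Zin N -> W -> Prop) (P : xprot N m (option W)) (h : nat),
      xp_computes_lifted_rel R P -> dt_rel_lb R h ->
      Rge (INR (xp_cost P)) (Rmult (Rmult (Rinv (IZR 2)) (INR h)) (log2R (INR m)))).
Proof.
have m0 : 0 < m by apply: leq_trans hm.
split.
- move=> f P h hP hlb.
  have [T [hT hc]] := final hm (ok := fun z o => o = f z) (P := P) hP.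
  apply: real_part hm (leq_trans _ hc).
  by apply: leq_pexp2l m0 _; apply: hlb.
- move=> W R P h hP hlb.
  have [T [hT hc]] := final hm (ok := rel_ok R) (P := P) hP.
  apply: real_part hm (leq_trans _ hc).
  by apply: leq_pexp2l m0 _; apply: hlb.
Qed.
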